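(* Let data $(\bm u^{\mathrm d}(t),\bm y^{\mathrm d}(t))_{t=0}^{T-1}$, $T>1$, each belong to $\mathscr{B}_{\mathrm{DF}}$, and let $H\doteq\begin{bmatrix}\bm u^{\mathrm d}(0) & \cdots & \bm u^{\mathrm d}(T-1)\\ \bm y^{\mathrm d}(0) & \cdots & \bm y^{\mathrm d}(T-1)\end{bmatrix}\in\mathbb{R}^{(6n+1)\times T}$ satisfy $\operatorname{rank}H=3n+1$. Fix $p_\bullet,q_\bullet\in\mathbb{R}^n$ and consider the problem $$\min_{p,q,P,Q,\ell,\mathsf v,\mathsf v_0,g}\ \mathbf 1^\top\ell$$ subject to $\mathsf v\ge 0$, $\mathsf v_0=1$, $\begin{bmatrix}u\\ y\end{bmatrix}=Hg$ with $u=(p,q)$, $y=(P,Q,\ell,\mathsf v,\mathsf v_0)$, $g\in\mathbb{R}^T$; $p\le p_\bullet$ and $q\le q_\bullet$ componentwise; and $P_i^2+Q_i^2\le\mathsf v_i\ell_i$ for all $i\in\mathcal N_+$. Then every optimal solution $(p^\star,q^\star,P^\star,Q^\star,\ell^\star,\mathsf v^\star,\mathsf v_0^\star,g^\star)$ satisfies $P^\star\odot P^\star+Q^\star\odot Q^\star=\mathsf v^\star\odot\ell^\star$, i.e. $(P_i^\star)^2+(Q_i^\star)^2=\mathsf v_i^\star\ell_i^\star$ for all $i\in\mathcal N_+$.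
   Context: Network: a tree with nodes $\mathcal N=\{0,1,\dots,n\}$ rooted at the slack node $0$; $\mathcal N_+=\{1,\dots,n\}$. Each $i\in\mathcal N_+$ has a unique parent $\pi(i)\in\mathcal N$, and the edge $(i,\pi(i))$ carries resistance $\mathtt r_i\ge 0$ and reactance $\mathtt x_i\ge0$ with $\mathtt r_i^2+\mathtt x_i^2\neq 0$. Variables: $p,q,P,Q,\ell,\mathsf v\in\mathbb{R}^n$ indexed by $\mathcal N_+$, and $\mathsf v_0\in\mathbb{R}$. The DistFlow equations are, for every $i\in\mathcal N_+$ with $j=\pi(i)$: (1) $P_i=p_i+\sum_{k:\pi(k)=i}(P_k-\mathtt r_k\ell_k)$; (2) $Q_i=q_i+\sum_{k:\pi(k)=i}(Q_k-\mathtt x_k\ell_k)$; (3) $\mathsf v_j=\mathsf v_i-2(\mathtt r_iP_i+\mathtt x_iQ_i)+(\mathtt r_i^2+\mathtt x_i^2)\ell_i$ (with $\mathsf v_j=\mathsf v_0$ when $j=0$); (4) $\ell_i\mathsf v_i=P_i^2+Q_i^2$. Input $u=(p,q)\in\mathbb{R}^{2n}$, output $y=(P,Q,\ell,\mathsf v,\mathsf v_0)\in\mathbb{R}^{4n+1}$ (vertical stacking in this order). $\mathscr{B}_{\mathrm{DF}}$ is the set of all $(u,y)$ satisfying (1)–(4). $\odot$ is the element-wise product and $\mathbf 1$ the all-ones vector. *)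

(* Defs.v *)
From HB Require Import structures.
From mathcomp Require Import all_boot all_order all_algebra.
From mathcomp Require Import reals.
Set Implicit Arguments. Unset Strict Implicit. Unset Printing Implicit Defensive.
Import Order.TTheory GRing.Theory Num.Theory.
Local Open Scope ring_scope.

(* Nodes N_+ = {1..n} are represented by 'I_n; the slack node 0 by None.
   par i = Some j : parent of i is the non-slack node j;  par i = None : parent is 0. *)

Definition is_tree (n : nat) (par : 'I_n -> option 'I_n) : Prop :=
  forall i : 'I_n, exists k : nat, iter k (obind par) (Some i) = None.

Definition valid_lines {R : realType} (n : nat) (r x : 'I_n -> R) : Prop :=
  forall i, 0 <= r i /\ 0 <= x i /\ r i ^+ 2 + x i ^+ 2 != 0.

Definition DistFlow {R : realType} (n : nat) (par : 'I_n -> option 'I_n)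
  (r x : 'I_n -> R) (p q P Q l v : 'I_n -> R) (v0 : R) : Prop :=
  forall i : 'I_n,
    [/\ P i = p i + \sum_(k | par k == Some i) (P k - r k * l k),
        Q i = q i + \sum_(k | par k == Some i) (Q k - x k * l k),
        (if par i is Some j then v j else v0)
          = v i - 2 * (r i * P i + x i * Q i) + (r i ^+ 2 + x i ^+ 2) * l i
      & l i * v i = P i ^+ 2 + Q i ^+ 2].

Definition stack {R : realType} (n : nat) (p q P Q l v : 'I_n -> R) (v0 : R)
  : 'cV[R]_(n + (n + (n + (n + (n + (n + 1)))))) :=
  col_mx (\col_i p i) (col_mx (\col_i q i) (col_mx (\col_i P i)
    (col_mx (\col_i Q i) (col_mx (\col_i l i) (col_mx (\col_i v i) v0%:M))))).

Definition data_matrix {R : realType} (n T : nat)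
  (pd qd Pd Qd ld vd : 'I_T -> 'I_n -> R) (v0d : 'I_T -> R)
  : 'M[R]_(n + (n + (n + (n + (n + (n + 1))))), T) :=
  \matrix_(i, t) stack (pd t) (qd t) (Pd t) (Qd t) (ld t) (vd t) (v0d t) i ord0.

Definition feasible {R : realType} (n T : nat)
  (H : 'M[R]_(n + (n + (n + (n + (n + (n + 1))))), T)) (pb qb : 'I_n -> R)
  (p q P Q l v : 'I_n -> R) (v0 : R) (g : 'cV[R]_T) : Prop :=
  (forall i, 0 <= v i) /\
  v0 = 1 /\
  stack p q P Q l v v0 = H *m g /\
  (forall i, p i <= pb i) /\
  (forall i, q i <= qb i) /\
  (forall i, P i ^+ 2 + Q i ^+ 2 <= v i * l i).

Definition objective {R : realType} (n : nat) (l : 'I_n -> R) : R := \sum_i l i.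

Definition optimal {R : realType} (n T : nat)
  (H : 'M[R]_(n + (n + (n + (n + (n + (n + 1))))), T)) (pb qb : 'I_n -> R)
  (p q P Q l v : 'I_n -> R) (v0 : R) (g : 'cV[R]_T) : Prop :=
  feasible H pb qb p q P Q l v v0 g /\
  forall p' q' P' Q' l' v' v0' g',
    feasible H pb qb p' q' P' Q' l' v' v0' g' -> objective l <= objective l'.

(* Main.v *)
Require Import Defs.
From HB Require Import structures.
From mathcomp Require Import all_boot all_order all_algebra.
From mathcomp Require Import reals.
From mathcomp Require Import ring lra.
Import Order.TTheory GRing.Theory Num.Theory.
Local Open Scope ring_scope.
Set Implicit Arguments. Unset Strict Implicit.

Notation Nsz n := (n + (n + (n + (n + (n + (n + 1))))))%N.

Definition ixp n (a : 'I_n) : 'I_(Nsz n) := lshift _ a.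
Definition ixq n (a : 'I_n) : 'I_(Nsz n) := rshift n (lshift _ a).
Definition ixP n (a : 'I_n) : 'I_(Nsz n) := rshift n (rshift n (lshift _ a)).
Definition ixQ n (a : 'I_n) : 'I_(Nsz n) := rshift n (rshift n (rshift n (lshift _ a))).
Definition ixl n (a : 'I_n) : 'I_(Nsz n) := rshift n (rshift n (rshift n (rshift n (lshift _ a)))).
Definition ixv n (a : 'I_n) : 'I_(Nsz n) := rshift n (rshift n (rshift n (rshift n (rshift n (lshift _ a))))).
Definition ix0 n : 'I_(Nsz n) := rshift n (rshift n (rshift n (rshift n (rshift n (rshift n (ord0 : 'I_1)))))).


Lemma stackEp (R : realType) n (p q P Q l v : 'I_n -> R) v0 a :
  stack p q P Q l v v0 (ixp a) 0 = p a.
Proof. by rewrite /stack /ixp ?col_mxEd ?col_mxEu !mxE. Qed.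

Lemma stackEq (R : realType) n (p q P Q l v : 'I_n -> R) v0 a :
  stack p q P Q l v v0 (ixq a) 0 = q a.
Proof. by rewrite /stack /ixq ?col_mxEd ?col_mxEu !mxE. Qed.

Lemma stackEP (R : realType) n (p q P Q l v : 'I_n -> R) v0 a :
  stack p q P Q l v v0 (ixP a) 0 = P a.
Proof. by rewrite /stack /ixP ?col_mxEd ?col_mxEu !mxE. Qed.

Lemma stackEQ (R : realType) n (p q P Q l v : 'I_n -> R) v0 a :
  stack p q P Q l v v0 (ixQ a) 0 = Q a.
Proof. by rewrite /stack /ixQ ?col_mxEd ?col_mxEu !mxE. Qed.

Lemma stackEl (R : realType) n (p q P Q l v : 'I_n -> R) v0 a :
  stack p q P Q l v v0 (ixl a) 0 = l a.
Proof. by rewrite /stack /ixl ?col_mxEd ?col_mxEu !mxE. Qed.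

Lemma stackEv (R : realType) n (p q P Q l v : 'I_n -> R) v0 a :
  stack p q P Q l v v0 (ixv a) 0 = v a.
Proof. by rewrite /stack /ixv ?col_mxEd ?col_mxEu !mxE. Qed.

Lemma stackE0 (R : realType) n (p q P Q l v : 'I_n -> R) v0 :
  stack p q P Q l v v0 (ix0 n) 0 = v0.
Proof. by rewrite /stack /ix0 !col_mxEd !mxE eqxx mulr1n. Qed.

Lemma ix_cases n (P : 'I_(Nsz n) -> Prop) :
  (forall a, P (ixp a)) -> (forall a, P (ixq a)) -> (forall a, P (ixP a)) ->
  (forall a, P (ixQ a)) -> (forall a, P (ixl a)) -> (forall a, P (ixv a)) -> P (ix0 n) ->
  forall i, P i.
Proof.
move=> h1 h2 h3 h4 h5 h6 h7 i.
rewrite -(splitK i); case: (split i) => [a|i1] /=; first exact: h1.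
rewrite -(splitK i1); case: (split i1) => [a|i2] /=; first exact: h2.
rewrite -(splitK i2); case: (split i2) => [a|i3] /=; first exact: h3.
rewrite -(splitK i3); case: (split i3) => [a|i4] /=; first exact: h4.
rewrite -(splitK i4); case: (split i4) => [a|i5] /=; first exact: h5.
rewrite -(splitK i5); case: (split i5) => [a|i6] /=; first exact: h6.
by rewrite (ord1 i6).
Qed.

Definition LDF (R : realType) n (par : 'I_n -> option 'I_n) (r x : 'I_n -> R)
  (p q P Q l v : 'I_n -> R) (v0 : R) : Prop :=
  forall i : 'I_n,
    [/\ P i = p i + \sum_(k | par k == Some i) (P k - r k * l k),
        Q i = q i + \sum_(k | par k == Some i) (Q k - x k * l k) &
        (if par i is Some j then v j else v0)
          = v i - 2 * (r i * P i + x i * Q i) + (r i ^+ 2 + x i ^+ 2) * l i].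

Lemma LDF_ext (R : realType) n par (r x : 'I_n -> R) p q P Q l v v0 p' q' P' Q' l' v' v0' :
  (forall a, p a = p' a) -> (forall a, q a = q' a) -> (forall a, P a = P' a) ->
  (forall a, Q a = Q' a) -> (forall a, l a = l' a) -> (forall a, v a = v' a) -> v0 = v0' ->
  LDF par r x p q P Q l v v0 -> LDF par r x p' q' P' Q' l' v' v0'.
Proof.
move=> ep eq eP eQ el ev e0 H i; have [h1 h2 h3] := H i; split.
- rewrite -eP -ep h1; congr (_ + _); apply: eq_bigr => k _; by rewrite eP el.
- rewrite -eQ -eq h2; congr (_ + _); apply: eq_bigr => k _; by rewrite eQ el.
- by case: (par i) h3 => [j|] h3; rewrite -!eP -!eQ -!el -!ev -?e0.
Qed.

Lemma LDF_lin (R : realType) n par (r x : 'I_n -> R) p q P Q l v v0 p' q' P' Q' l' v' v0' c d :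
  LDF par r x p q P Q l v v0 -> LDF par r x p' q' P' Q' l' v' v0' ->
  LDF par r x (fun k => c * p k + d * p' k) (fun k => c * q k + d * q' k)
    (fun k => c * P k + d * P' k) (fun k => c * Q k + d * Q' k)
    (fun k => c * l k + d * l' k) (fun k => c * v k + d * v' k) (c * v0 + d * v0').
Proof.
move=> H H' i; have [h1 h2 h3] := H i; have [h1' h2' h3'] := H' i; split => /=.
- rewrite [in RHS](eq_bigr (fun k => c * (P k - r k * l k) + d * (P' k - r k * l' k))); last by move=> k _; ring.
  rewrite big_split /= -!mulr_sumr h1 h1'; ring.
- rewrite [in RHS](eq_bigr (fun k => c * (Q k - x k * l k) + d * (Q' k - x k * l' k))); last by move=> k _; ring.
  rewrite big_split /= -!mulr_sumr h2 h2'; ring.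
- by case: (par i) h3 h3' => [j|] -> ->; ring.
Qed.

Definition LinDF (R : realType) n (par : 'I_n -> option 'I_n) (r x : 'I_n -> R)
  (w : 'cV[R]_(Nsz n)) : Prop :=
  LDF par r x (fun a => w (ixp a) 0) (fun a => w (ixq a) 0) (fun a => w (ixP a) 0)
    (fun a => w (ixQ a) 0) (fun a => w (ixl a) 0) (fun a => w (ixv a) 0) (w (ix0 n) 0).

Lemma LinDF_stack (R : realType) n par (r x : 'I_n -> R) p q P Q l v v0 :
  LDF par r x p q P Q l v v0 <-> LinDF par r x (stack p q P Q l v v0).
Proof.
split; apply: LDF_ext => *; by rewrite ?stackEp ?stackEq ?stackEP ?stackEQ ?stackEl ?stackEv ?stackE0.
Qed.

Lemma LinDF_lin (R : realType) n par (r x : 'I_n -> R) w1 w2 c d :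
  LinDF par r x w1 -> LinDF par r x w2 -> LinDF par r x (c *: w1 + d *: w2).
Proof.
move=> h1 h2; have := LDF_lin c d h1 h2; apply: LDF_ext => *; by rewrite !mxE.
Qed.

Lemma LinDF0 (R : realType) n par (r x : 'I_n -> R) : LinDF par r x 0.
Proof.
have : LDF par r x (fun=> 0) (fun=> 0) (fun=> 0) (fun=> 0) (fun=> 0) (fun=> 0) 0.
  move=> i; split; rewrite ?big1 //; do ?by move=> k _; ring.
  - by ring.
  - by ring.
  - by case: (par i) => [?|]; ring.
apply: LDF_ext => *; by rewrite !mxE.
Qed.

Lemma mul_col_sum (R : realType) N T (M : 'M[R]_(N, T)) (g : 'cV[R]_T) :
  M *m g = \sum_t g t 0 *: col t M.
Proof.
apply/matrixP => i j; rewrite !mxE summxE; apply: eq_bigr => t _.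
by rewrite !mxE (ord1 j) mulrC.
Qed.

Lemma LinDF_mul (R : realType) n par (r x : 'I_n -> R) T (M : 'M[R]_(Nsz n, T)) g :
  (forall t, LinDF par r x (col t M)) -> LinDF par r x (M *m g).
Proof.
move=> hM; rewrite mul_col_sum; apply: (big_ind (LinDF par r x)).
- exact: LinDF0.
- move=> w1 w2 h1 h2; have := LinDF_lin 1 1 h1 h2; by rewrite !scale1r.
- move=> t _; have := LinDF_lin (g t 0) 0 (hM t) (hM t); by rewrite scale0r addr0.
Qed.

Definition fsel n (j : 'I_(n + (n + (n + 1)))) : 'I_(Nsz n) :=
  match split j with
  | inl a => ixP a
  | inr j1 => match split j1 with
              | inl a => ixQ a
              | inr j2 => match split j2 with inl a => ixl a | inr _ => ix0 n end
              end
  end.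

Definition Phi (R : realType) n : 'M[R]_(Nsz n, n + (n + (n + 1))) :=
  \matrix_(i, j) (i == fsel j)%:R.

Lemma Phi_sel (R : realType) n (u : 'rV[R]_(Nsz n)) j : (u *m Phi R n) 0 j = u 0 (fsel j).
Proof.
rewrite !mxE (bigD1 (fsel j)) //= mxE eqxx mulr1 big1 ?addr0 // => i /negbTE hi.
by rewrite mxE hi mulr0.
Qed.

Lemma fselP n a : fsel (lshift (n + (n + 1)) a) = ixP a.
Proof. by rewrite /fsel -[lshift _ a]/(unsplit (inl a)) unsplitK. Qed.
Lemma fselQ n a : fsel (rshift n (lshift (n + 1) a)) = ixQ a.
Proof.
by rewrite /fsel -[rshift n _]/(unsplit (inr _)) unsplitK -[lshift _ a]/(unsplit (inl a)) unsplitK.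
Qed.
Lemma fsell n a : fsel (rshift n (rshift n (lshift 1 a))) = ixl a.
Proof.
by rewrite /fsel -[rshift n (rshift n _)]/(unsplit (inr _)) unsplitK
  -[rshift n _]/(unsplit (inr _)) unsplitK -[lshift _ a]/(unsplit (inl a)) unsplitK.
Qed.
Lemma fsel0 n : fsel (rshift n (rshift n (rshift n (ord0 : 'I_1)))) = ix0 n.
Proof.
by rewrite /fsel -[rshift n (rshift n (rshift n _))]/(unsplit (inr _)) unsplitK
  -[rshift n (rshift n _)]/(unsplit (inr _)) unsplitK -[rshift n _]/(unsplit (inr _)) unsplitK.
Qed.

Lemma LinDF_inj (R : realType) n par (r x : 'I_n -> R) (w : 'cV[R]_(Nsz n)) :
  is_tree par -> LinDF par r x w -> w^T *m Phi R n = 0 -> w = 0.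
Proof.
move=> htree hL hz.
have zsel j : w (fsel j) 0 = 0.
  by have := Phi_sel w^T j; rewrite hz !mxE => <-.
have zP a : w (ixP a) 0 = 0 by rewrite -fselP zsel.
have zQ a : w (ixQ a) 0 = 0 by rewrite -fselQ zsel.
have zl a : w (ixl a) 0 = 0 by rewrite -fsell zsel.
have z0 : w (ix0 n) 0 = 0 by rewrite -fsel0 zsel.
have zp a : w (ixp a) 0 = 0.
  have [h1 _ _] := hL a; move: h1; rewrite zP big1 ?addr0 => [<-//|k _].
  by rewrite zP zl mulr0 subr0.
have zq a : w (ixq a) 0 = 0.
  have [_ h2 _] := hL a; move: h2; rewrite zQ big1 ?addr0 => [<-//|k _].
  by rewrite zQ zl mulr0 subr0.
have zv a : w (ixv a) 0 = 0.
  have [k hk] := htree a; elim: k a hk => [|k IH] a; first by [].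
  rewrite iterSr /=; have [_ _ h3] := hL a; move: h3.
  rewrite zP zQ zl.
  case: (par a) => [b|] h3 hk.
  - rewrite (IH b hk) in h3; lra.
  - rewrite z0 in h3; lra.
apply/matrixP => i j; rewrite (ord1 j) mxE; move: i; exact: ix_cases.
Qed.

Lemma surjH (R : realType) n par (r x : 'I_n -> R) T (H : 'M[R]_(Nsz n, T)) :
  is_tree par -> (forall t, LinDF par r x (col t H)) -> \rank H = (3 * n + 1)%N ->
  forall w, LinDF par r x w -> exists g, H *m g = w.
Proof.
move=> htree hcols hrank.
have hk : (H^T :&: kermx (Phi R n))%MS = 0.
  apply/row_matrixP => i; rewrite row0.
  set u := row i _.
  have uH : (u <= H^T)%MS := submx_trans (row_sub _ _) (capmxSl _ _).
  have /sub_kermxP uK : (u <= kermx (Phi R n))%MS := submx_trans (row_sub _ _) (capmxSr _ _).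
  case/submxP: uH => D hD.
  have : u^T = 0.
    apply: (LinDF_inj htree); last by rewrite trmxK.
    rewrite hD trmx_mul trmxK; exact: LinDF_mul.
  by move/(congr1 trmx); rewrite trmxK => ->; rewrite trmx0.
set A := H^T *m Phi R n.
have rk : \rank A = (n + (n + (n + 1)))%N.
  have := mxrank_mul_ker H^T (Phi R n); rewrite hk mxrank0 addn0 mxrank_tr hrank => ->.
  rewrite !mulSn mul0n addn0 !addnA.
  reflexivity.
have /row_fullP [B hB] : row_full A by rewrite /row_full rk.
move=> w hw.
pose b := w^T *m Phi R n.
pose c := b *m B.
exists c^T.
have : H *m c^T - w = 0.
  apply: (LinDF_inj (r:=r) (x:=x) htree).
    by have := LinDF_lin 1 (-1) (LinDF_mul c^T hcols) hw; rewrite scale1r scaleN1r.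
  - rewrite raddfB /= trmx_mul trmxK mulmxBl -mulmxA -/A /c -mulmxA hB mulmx1.
    by rewrite subrr.
by move/eqP; rewrite subr_eq0 => /eqP.
Qed.

Lemma LDF_of_DF (R : realType) n par (r x : 'I_n -> R) p q P Q l v v0 :
  DistFlow par r x p q P Q l v v0 -> LDF par r x p q P Q l v v0.
Proof. by move=> h i; have [h1 h2 h3 _] := h i; split. Qed.

Lemma data_cols (R : realType) n par (r x : 'I_n -> R) T
  (pd qd Pd Qd ld vd : 'I_T -> 'I_n -> R) (v0d : 'I_T -> R) :
  (forall t : 'I_T, DistFlow par r x (pd t) (qd t) (Pd t) (Qd t) (ld t) (vd t) (v0d t)) ->
  forall t, LinDF par r x (col t (data_matrix pd qd Pd Qd ld vd v0d)).
Proof.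
move=> hDF t.
have -> : col t (data_matrix pd qd Pd Qd ld vd v0d) =
          stack (pd t) (qd t) (Pd t) (Qd t) (ld t) (vd t) (v0d t).
  by apply/matrixP => i j; rewrite !mxE (ord1 j).
by move: (LDF_of_DF (hDF t)) => /LinDF_stack.
Qed.

Lemma sum_ind (R : realType) n (Pr : 'I_n -> bool) (i0 : 'I_n) (A : R) :
  \sum_(c | Pr c) (if c == i0 then A else 0) = if Pr i0 then A else 0.
Proof.
case: ifP => h.
  rewrite (bigD1 i0) //= eqxx big1 ?addr0 // => c /andP[_ /negbTE ->] //.
rewrite big1 // => c hc; case: eqVneq => // e; by rewrite e h in hc.
Qed.

Lemma eps_exists (R : realType) (P Q v l r x : R) :
  0 <= r -> 0 <= x -> P ^+ 2 + Q ^+ 2 < v * l ->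
  exists e, 0 < e /\ (P - r * e / 2) ^+ 2 + (Q - x * e / 2) ^+ 2 <= v * (l - e).
Proof.
move=> hr hx hlt.
set d := v * l - (P ^+ 2 + Q ^+ 2).
have hd : 0 < d by rewrite /d; lra.
set a := v - r * P - x * Q.
set z := r ^+ 2 + x ^+ 2.
have hz : 0 <= z by rewrite /z; nra.
have ha : a <= `|a| := ler_norm a.
have han : 0 <= `|a| := normr_ge0 a.
set C := `|a| + z / 4 + d + 1.
have hC : 0 < C by rewrite /C; lra.
exists (d / (2 * C)).
set e := d / (2 * C).
have heC : e * C = d / 2 by rewrite /e; field; lra.
have he : 0 < e by rewrite /e; apply: divr_gt0 => //; lra.
have he1 : e <= 1.
  have : e * (d + 1) <= e * C by apply: ler_wpM2l; [lra| rewrite /C; lra].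
  nra.
split => //.
have e1 : (P - r * e / 2) ^+ 2 + (Q - x * e / 2) ^+ 2 = P ^+ 2 + Q ^+ 2 - e * (r * P + x * Q) + e ^+ 2 * z / 4.
  by rewrite /z; field.
rewrite e1.
have : e ^+ 2 * z <= e * z.
  have hee : e ^+ 2 <= e by rewrite expr2; nra.
  by apply: ler_wpM2r.
have : e * a <= e * `|a| by apply: ler_wpM2l; lra.
rewrite /C in heC; rewrite /a /d in ha hd heC *. nra.
Qed.

Theorem lemma3 (R : realType) (n T : nat) (par : 'I_n -> option 'I_n)
  (r x : 'I_n -> R)
  (pd qd Pd Qd ld vd : 'I_T -> 'I_n -> R) (v0d : 'I_T -> R)
  (pb qb : 'I_n -> R) :
  is_tree par ->
  valid_lines r x ->
  (1 < T)%N ->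
  (forall t : 'I_T,
     DistFlow par r x (pd t) (qd t) (Pd t) (Qd t) (ld t) (vd t) (v0d t)) ->
  \rank (data_matrix pd qd Pd Qd ld vd v0d) = (3 * n + 1)%N ->
  forall (p q P Q l v : 'I_n -> R) (v0 : R) (g : 'cV[R]_T),
    optimal (data_matrix pd qd Pd Qd ld vd v0d) pb qb p q P Q l v v0 g ->
    forall i : 'I_n, P i ^+ 2 + Q i ^+ 2 = v i * l i.
Proof.
move=> htree hval _ hDF hrank p q P Q l v v0 g [[hv [h0 [hst [hp [hq hcone]]]]] hopt] i0.
apply/eqP; rewrite eq_le hcone /= leNgt; apply/negP => hlt.
have [hr0 [hx0 _]] := hval i0.
have [e [he hcone0]] := eps_exists hr0 hx0 hlt.
set H := data_matrix pd qd Pd Qd ld vd v0d in hst hrank hopt.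
have hcols := data_cols hDF.
have hold : LDF par r x p q P Q l v v0.
  apply/(LinDF_stack par r x); rewrite hst; exact: LinDF_mul.
pose dP k : R := if k == i0 then r i0 * e / 2 else 0.
pose dQ k : R := if k == i0 then x i0 * e / 2 else 0.
pose dl k : R := if k == i0 then e else 0.
pose ep k : R := if par i0 == Some k then r i0 * e / 2 else 0.
pose eq k : R := if par i0 == Some k then x i0 * e / 2 else 0.
pose p' k := p k - dP k - ep k.
pose q' k := q k - dQ k - eq k.
pose P' k := P k - dP k.
pose Q' k := Q k - dQ k.
pose l' k := l k - dl k.
have hnew : LDF par r x p' q' P' Q' l' v v0.
  move=> k; have [h1 h2 h3] := hold k; split.
  - rewrite (eq_bigr (fun c => (P c - r c * l c) + (if c == i0 then r i0 * e / 2 else 0))); last first.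
      move=> c _; rewrite /P' /l' /dP /dl; case: eqVneq => [->|_]; first by field.
      by ring.
    rewrite big_split /= sum_ind /P' /p' h1 /ep; move: (\sum_(_ | _) _) (dP k) (if _ then _ else _) => S D E; ring.
  - rewrite (eq_bigr (fun c => (Q c - x c * l c) + (if c == i0 then x i0 * e / 2 else 0))); last first.
      move=> c _; rewrite /Q' /l' /dQ /dl; case: eqVneq => [->|_]; first by field.
      by ring.
    rewrite big_split /= sum_ind /Q' /q' h2 /eq; move: (\sum_(_ | _) _) (dQ k) (if _ then _ else _) => S D E; ring.
  - rewrite h3 /P' /Q' /l' /dP /dQ /dl; case: eqVneq => [->|_]; first by field.
    by ring.
have [g' hg'] := surjH htree hcols hrank (proj1 (LinDF_stack par r x p' q' P' Q' l' v v0) hnew).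
have hfeas : feasible H pb qb p' q' P' Q' l' v v0 g'.
  have hre : 0 <= r i0 * e / 2 by apply: divr_ge0 => //; apply: mulr_ge0 => //; lra.
  have hxe : 0 <= x i0 * e / 2 by apply: divr_ge0 => //; apply: mulr_ge0 => //; lra.
  split => //; split => //; split; first by rewrite hg'.
  split; [|split].
  - move=> k; have := hp k; rewrite /p' /dP /ep; case: ifP => _; case: ifP => _; lra.
  - move=> k; have := hq k; rewrite /q' /dQ /eq; case: ifP => _; case: ifP => _; lra.
  - move=> k; rewrite /P' /Q' /l' /dP /dQ /dl; case: eqVneq => [->|_].
      exact: hcone0.
    by rewrite !subr0; apply: hcone.
have := hopt _ _ _ _ _ _ _ _ hfeas.
rewrite /objective /l' sumrB /dl (sum_ind xpredT) /=; lra.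
Qed.
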